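(* Consider a tree power network $(\mathcal{V},\mathcal{E})$, $\mathcal{V}=\{1,\dots,n\}$, with fixed voltage magnitudes $|V_i|=\overline{V}_i>0$ and angle limits satisfying $$-\tan^{-1}\!\Big(\frac{b_{ik}}{g_{ik}}\Big)<\underline{\theta}_{ik}\le\overline{\theta}_{ik}<\tan^{-1}\!\Big(\frac{b_{ik}}{g_{ik}}\Big)\quad\text{for all }(i,k)\in\mathcal{E},$$ with $\underline{\theta}_{ik}\in[-\pi,0]$, $\overline{\theta}_{ik}\in[0,\pi]$. Consider the OPF problem with load vector $\mathbf{p}_D=(P_{D_1},\dots,P_{D_n})$: minimize $\sum_{i\in\mathcal{V}}f_i(P_{G_i})$ subject to $\underline{P}_{G_i}\le P_{G_i}\le\overline{P}_{G_i}$ and $P_{G_i}-P_{D_i}=\sum_{k\sim i}P_{ik}$ for $i\in\mathcal{V}$, and $(P_{ik},P_{ki})\in\mathcal{F}_{\theta_{ik}}$ for $(i,k)\in\mathcal{E}$, where each $f_i$ is monotonically increasing and convex. Let $f^*_{\boldsymbol\epsilon}$ be its optimal value when $\mathbf{p}_D$ is replaced by $\mathbf{p}_D+\boldsymbol\epsilon$, assume $f^*_{\boldsymbol\epsilon}$ is differentiable at $\boldsymbol\epsilon=0$, and let $\lambda_1,\dots,\lambda_n$ be the locational marginal prices, i.e. the numbers such that $\sum_i\lambda_i\epsilon_i$ is the first-order approximation of $f^*_{\boldsymbol\epsilon}-f^*_0$. Then for every $i\in\mathcal{V}$: (1) $\lambda_i$ equals the Lagrange multiplier of the power balance equation $P_{G_i}-P_{D_i}=\sum_{k\sim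 i}P_{ik}$ in the convexified OPF problem (the same problem with each constraint $(P_{ik},P_{ki})\in\mathcal{F}_{\theta_{ik}}$ replaced by $(P_{ik},P_{ki})\in\mathrm{conv}(\mathcal{F}_{\theta_{ik}})$); (2) $\lambda_i\ge0$.
   Context: Each line $(i,k)\in\mathcal{E}$ has admittance $y_{ik}=g_{ik}-jb_{ik}$ with $g_{ik},b_{ik}\ge0$. For $\theta_{ik}=\theta_i-\theta_k$ (difference of bus voltage phases), the line flows are $P_{ik}=\overline{V}_i^2 g_{ik}+\overline{V}_i\overline{V}_k b_{ik}\sin\theta_{ik}-\overline{V}_i\overline{V}_k g_{ik}\cos\theta_{ik}$ and $P_{ki}=\overline{V}_k^2 g_{ik}-\overline{V}_i\overline{V}_k b_{ik}\sin\theta_{ik}-\overline{V}_i\overline{V}_k g_{ik}\cos\theta_{ik}$. $\mathcal{F}_{\theta_{ik}}\subset\mathbb{R}^2$ is the set of pairs $(P_{ik},P_{ki})$ obtained as $\theta_{ik}$ ranges over $[\underline{\theta}_{ik},\overline{\theta}_{ik}]$. $P_{G_i}$ denotes the generation and $P_{D_i}$ the load at bus $i$; $\mathrm{conv}$ denotes convex hull. *)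

(* Defs.v *)
From mathcomp Require Import all_boot all_order all_algebra.
From mathcomp Require Import all_classical all_reals all_analysis.

Set Implicit Arguments.
Unset Strict Implicit.
Unset Printing Implicit Defensive.

Import Order.TTheory GRing.Theory Num.Theory.
Local Open Scope classical_set_scope.
Local Open Scope ring_scope.

Section Defs.
Variable R : realType.

(* Active line flows P_ik and P_ki as functions of the angle difference. *)
Definition line_Pik (Vi Vk g b th : R) : R :=
  Vi ^+ 2 * g + Vi * Vk * b * sin th - Vi * Vk * g * cos th.
Definition line_Pki (Vi Vk g b th : R) : R :=
  Vk ^+ 2 * g - Vi * Vk * b * sin th - Vi * Vk * g * cos th.

Definition flow_region (Vi Vk g b thlo thhi : R) : set (R * R) :=
  [set p | exists th, thlo <= th <= thhi /\
     p = (line_Pik Vi Vk g b th, line_Pki Vi Vk g b th)].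

Definition convex_hull (A : set (R * R)) : set (R * R) :=
  [set p | exists (k : nat) (w : 'I_k -> R) (q : 'I_k -> R * R),
     (forall j, 0 <= w j) /\ \sum_(j < k) w j = 1 /\ (forall j, A (q j)) /\
     p = (\sum_(j < k) w j * (q j).1, \sum_(j < k) w j * (q j).2)].

(* tan^{-1}(b/g), with the convention tan^{-1}(b/0) = pi/2 *)
Definition arctan_ratio (b g : R) : R :=
  if g == 0 then pi / 2 else atan (b / g).

Definition edge_region n m (ends : 'I_m -> 'I_n * 'I_n) (V : 'I_n -> R)
  (g b thlo thhi : 'I_m -> R) (j : 'I_m) : set (R * R) :=
  flow_region (V (ends j).1) (V (ends j).2) (g j) (b j) (thlo j) (thhi j).

Definition net_flow n m (ends : 'I_m -> 'I_n * 'I_n) (x : 'I_m -> R * R)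
  (i : 'I_n) : R :=
  \sum_(j < m | (ends j).1 == i) (x j).1 + \sum_(j < m | (ends j).2 == i) (x j).2.

Definition opf_feasible n m (ends : 'I_m -> 'I_n * 'I_n) (Plo Phi PD : 'I_n -> R)
  (F : 'I_m -> set (R * R)) : set (('I_n -> R) * ('I_m -> R * R)) :=
  [set z | (forall i, Plo i <= z.1 i <= Phi i) /\
           (forall i, z.1 i - PD i = net_flow ends z.2 i) /\
           (forall j, F j (z.2 j))].

Definition cost n m (f : 'I_n -> R -> R) (z : ('I_n -> R) * ('I_m -> R * R)) : R :=
  \sum_(i < n) f i (z.1 i).

Definition is_inf (A : set R) (v : R) : Prop :=
  (forall a, A a -> v <= a) /\ (forall e, 0 < e -> exists a, A a /\ a < v + e).

Definition opt_value T (S : set T) (obj : T -> R) (v : R) : Prop :=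
  is_inf [set y | exists z, S z /\ y = obj z] v.

Definition lagrangian n m (ends : 'I_m -> 'I_n * 'I_n) (f : 'I_n -> R -> R)
  (PD mu : 'I_n -> R) (z : ('I_n -> R) * ('I_m -> R * R)) : R :=
  cost f z + \sum_(i < n) mu i * (PD i + net_flow ends z.2 i - z.1 i).

(* mu is a (dual-optimal) Lagrange multiplier vector of the balance equations *)
Definition is_balance_multiplier n m (ends : 'I_m -> 'I_n * 'I_n)
  (Plo Phi PD : 'I_n -> R) (F : 'I_m -> set (R * R)) (f : 'I_n -> R -> R)
  (mu : 'I_n -> R) : Prop :=
  exists v, opt_value (opf_feasible ends Plo Phi PD F) (cost f) v /\
    is_inf [set y | exists z : ('I_n -> R) * ('I_m -> R * R),
              (forall i, Plo i <= z.1 i <= Phi i) /\ (forall j, F j (z.2 j)) /\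
              y = lagrangian ends f PD mu z] v.

(* lam is the gradient at eps = 0 of the optimal value f*_eps
   (Frechet differentiability, max norm on R^n) *)
Definition is_lmp n m (ends : 'I_m -> 'I_n * 'I_n)
  (Plo Phi PD : 'I_n -> R) (F : 'I_m -> set (R * R)) (f : 'I_n -> R -> R)
  (lam : 'I_n -> R) : Prop :=
  exists f0, opt_value (opf_feasible ends Plo Phi PD F) (cost f) f0 /\
  forall e, 0 < e -> exists d, 0 < d /\
    forall eps : 'I_n -> R, (forall i, `|eps i| < d) ->
      exists v, opt_value (opf_feasible ends Plo Phi (fun i => PD i + eps i) F)
                          (cost f) v /\
        `|v - f0 - \sum_(i < n) lam i * eps i| <= e * \big[Num.max/0]_(i < n) `|eps i|.

Definition adj n m (ends : 'I_m -> 'I_n * 'I_n) : rel 'I_n :=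
  fun i k => [exists j, (ends j == (i, k)) || (ends j == (k, i))].

Definition is_tree n m (ends : 'I_m -> 'I_n * 'I_n) : Prop :=
  (m.+1 = n)%N /\ (forall i k : 'I_n, connect (adj ends) i k).

End Defs.

(* Main.v *)
Require Import Defs.
From mathcomp Require Import all_boot all_order all_algebra.
From mathcomp Require Import all_classical all_reals all_analysis.
From mathcomp Require Import ring lra zify.
Import Order.TTheory GRing.Theory Num.Theory numFieldNormedType.Exports.
Local Open Scope classical_set_scope.
Local Open Scope ring_scope.
Set Implicit Arguments.
Unset Strict Implicit.
Unset Printing Implicit Defensive.
Section A.
Variable R : realType.


Lemma edge_pos (g b lo hi th : R) : 0 <= g -> 0 <= b ->
  - arctan_ratio b g < lo -> hi < arctan_ratio b g -> lo <= th <= hi ->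
  0 < cos th /\ ((g = 0 /\ b = 0) \/ (g * sin th < b * cos th /\ - (g * sin th) < b * cos th)).
Proof.
move=> g0 b0 hlo hhi /andP[h1 h2].
rewrite /arctan_ratio in hlo hhi.
have pi2 : 0 < pi / 2 :> R by rewrite divr_gt0 // pi_gt0.
case: eqP hlo hhi => [gz|/eqP gnz] hlo hhi.
- have ct : 0 < cos th.
    by apply: cos_gt0_pihalf; apply/andP; split; [apply: lt_le_trans hlo h1 | apply: le_lt_trans h2 hhi].
  split=> //.
  have [bz|bnz] := eqVneq b 0; [by left|right].
  have bp : 0 < b by rewrite lt_neqAle eq_sym bnz b0.
  by rewrite gz mul0r oppr0; split; apply: mulr_gt0.
- have gp : 0 < g by rewrite lt_neqAle eq_sym gnz g0.
  set al := atan (b / g) in hlo hhi.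
  have alp : al < pi / 2 by apply: atan_ltpi2.
  have al0 : 0 <= al by rewrite /al -(@atan0 R); apply: le_atan; rewrite divr_ge0.
  have thl : - al < th by apply: lt_le_trans hlo h1.
  have thh : th < al by apply: le_lt_trans h2 hhi.
  have ct : 0 < cos th.
    apply: cos_gt0_pihalf; apply/andP; split.
      by apply: lt_trans thl; rewrite ltrN2.
    by apply: lt_trans alp.
  split=> //; right.
  have inI : forall x, - al < x < al -> x \in `](- (pi/2)), (pi/2)[.
    move=> x /andP[x1 x2]; rewrite in_itv /=; apply/andP; split.
      by apply: lt_trans x1; rewrite ltrN2.
    by apply: lt_trans alp.
  have alI : al \in `](- (pi/2)), (pi/2)[.
    rewrite in_itv /=; apply/andP; split=> //.
    by apply: lt_le_trans al0; rewrite oppr_lt0.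
  have t1 : tan th < b / g.
    rewrite -[X in _ < X](@atanK R) -/al.
    by rewrite (ltr_tan (inI th _) alI) // thl thh.
  have t2 : tan (- th) < b / g.
    rewrite -[X in _ < X](@atanK R) -/al.
    rewrite (ltr_tan (inI (- th) _) alI) //; first lra.
    by apply/andP; split; lra.
  have hs : sin th = tan th * cos th by rewrite /tan divfK // gt_eqF.
  have hs' : - sin th = tan (- th) * cos th by rewrite /tan sinN cosN divfK // gt_eqF.
  have hb : b = b / g * g by rewrite divfK // gt_eqF.
  set T1 := tan th in t1 hs; set T2 := tan (- th) in t2 hs'; set B := b / g in t1 t2 hb.
  have gc : 0 < g * cos th by apply: mulr_gt0.
  rewrite hb -mulrN hs' hs; split; nra.
Qed.

Lemma edge_mono (Vi Vk g b lo hi t t' : R) : 0 < Vi -> 0 < Vk ->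
  - pi <= lo -> hi <= pi ->
  (forall th, lo <= th <= hi -> 0 <= g * sin th + b * cos th /\ 0 <= b * cos th - g * sin th) ->
  lo <= t -> t <= t' -> t' <= hi ->
  line_Pik Vi Vk g b t <= line_Pik Vi Vk g b t' /\ line_Pki Vi Vk g b t' <= line_Pki Vi Vk g b t.
Proof.
move=> vi vk plo phi H h1 h2 h3.
set m := (t + t') / 2; set d := (t' - t) / 2.
have et' : t' = m + d by rewrite /m /d; field.
have et : t = m + - d by rewrite /m /d; field.
have sd : 0 <= sin d.
  apply: sin_ge0_pi; apply/andP; split; rewrite /d; lra.
have [Dm Nm] : 0 <= g * sin m + b * cos m /\ 0 <= b * cos m - g * sin m.
  by apply: H; apply/andP; split; rewrite /m; lra.
have A : 0 <= Vi * Vk by apply: mulr_ge0; apply: ltW.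
rewrite /line_Pik /line_Pki et' et !sinD !cosD sinN cosN.
split; rewrite -subr_ge0.
- have -> : Vi ^+ 2 * g + Vi * Vk * b * (sin m * cos d + cos m * sin d) -
   Vi * Vk * g * (cos m * cos d - sin m * sin d) -
   (Vi ^+ 2 * g + Vi * Vk * b * (sin m * cos d + cos m * - sin d) -
    Vi * Vk * g * (cos m * cos d - sin m * - sin d)) = 2 * (Vi * Vk) * sin d * (g * sin m + b * cos m) by ring.
  by apply: mulr_ge0 => //; apply: mulr_ge0 => //; apply: mulr_ge0.
- have -> : Vk ^+ 2 * g - Vi * Vk * b * (sin m * cos d + cos m * - sin d) -
   Vi * Vk * g * (cos m * cos d - sin m * - sin d) -
   (Vk ^+ 2 * g - Vi * Vk * b * (sin m * cos d + cos m * sin d) -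
    Vi * Vk * g * (cos m * cos d - sin m * sin d)) = 2 * (Vi * Vk) * sin d * (b * cos m - g * sin m) by ring.
  by apply: mulr_ge0 => //; apply: mulr_ge0 => //; apply: mulr_ge0.
Qed.

Lemma ivt2 (f : R -> R) (a b v : R) : continuous f ->
  Num.min (f a) (f b) <= v <= Num.max (f a) (f b) ->
  exists c, Num.min a b <= c <= Num.max a b /\ f c = v.
Proof.
move=> cf hv.
have cw : forall x y : R, {within `[x, y], continuous f}.
  by move=> x y; apply: continuous_subspaceT => z; exact: cf.
have [ab|ba] := leP a b.
- have := IVT ab (cw a b) hv; case=> c cin fc.
  by exists c; split=> //.
- have ba' := ltW ba.
  have hv' : Num.min (f b) (f a) <= v <= Num.max (f b) (f a) by rewrite minC maxC.
  have := IVT ba' (cw b a) hv'; case=> c cin fc.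
  by exists c; split=> //.
Qed.
Lemma cont_Pik (Vi Vk g b : R) : continuous (line_Pik Vi Vk g b).
Proof.
move=> x; rewrite /line_Pik.
apply: cvgB; first apply: cvgD; first exact: cvg_cst.
- by apply: cvgM; [exact: cvg_cst| exact: continuous_sin].
- by apply: cvgM; [exact: cvg_cst| exact: continuous_cos].
Qed.
Lemma cont_Pki (Vi Vk g b : R) : continuous (line_Pki Vi Vk g b).
Proof.
move=> x; rewrite /line_Pki.
apply: cvgB; first apply: cvgB; first exact: cvg_cst.
- by apply: cvgM; [exact: cvg_cst| exact: continuous_sin].
- by apply: cvgM; [exact: cvg_cst| exact: continuous_cos].
Qed.
Lemma support (Vi Vk g b t s : R) : 0 <= Vi * Vk -> 0 <= g -> 0 <= b ->
  0 <= (g * sin s + b * cos s) * (line_Pki Vi Vk g b t - line_Pki Vi Vk g b s)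
     + (b * cos s - g * sin s) * (line_Pik Vi Vk g b t - line_Pik Vi Vk g b s).
Proof.
move=> A g0 b0; rewrite /line_Pik /line_Pki.
have e1 : sin s ^+ 2 + cos s ^+ 2 - 1 = 0 by rewrite sin2cos2; ring.
have e2 : sin t ^+ 2 + cos t ^+ 2 - 1 = 0 by rewrite sin2cos2; ring.
have -> : (g * sin s + b * cos s) *
  (Vk ^+ 2 * g - Vi * Vk * b * sin t - Vi * Vk * g * cos t -
   (Vk ^+ 2 * g - Vi * Vk * b * sin s - Vi * Vk * g * cos s)) +
  (b * cos s - g * sin s) *
  (Vi ^+ 2 * g + Vi * Vk * b * sin t - Vi * Vk * g * cos t -
   (Vi ^+ 2 * g + Vi * Vk * b * sin s - Vi * Vk * g * cos s))
  = (Vi * Vk) * b * g * ((sin t - sin s) ^+ 2 + (cos t - cos s) ^+ 2)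
  + (Vi * Vk) * b * g * ((sin s ^+ 2 + cos s ^+ 2 - 1) - (sin t ^+ 2 + cos t ^+ 2 - 1)) by ring.
rewrite e1 e2 subrr mulr0 addr0; apply: mulr_ge0; last by rewrite addr_ge0 // sqr_ge0.
by apply: mulr_ge0 => //; apply: mulr_ge0.
Qed.
Lemma sum_aff k (wt : 'I_k -> R) (x y : 'I_k -> R) (al be ga : R) :
  \sum_(j < k) wt j = 1 ->
  \sum_(j < k) wt j * (al * x j + be * y j + ga) =
  al * \sum_(j < k) wt j * x j + be * \sum_(j < k) wt j * y j + ga.
Proof.
move=> w1.
have -> : \sum_(j < k) wt j * (al * x j + be * y j + ga) =
  \sum_(j < k) (al * (wt j * x j) + be * (wt j * y j) + ga * wt j).
  by apply: eq_bigr => j _; ring.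
rewrite !big_split /= -!mulr_sumr w1; ring.
Qed.
Lemma hull_below (Vi Vk g b lo hi : R) (p : R * R) : 0 < Vi -> 0 < Vk -> 0 <= g -> 0 <= b ->
  (forall th, lo <= th <= hi -> 0 < cos th /\ ((g = 0 /\ b = 0) \/
       (g * sin th < b * cos th /\ - (g * sin th) < b * cos th))) ->
  convex_hull (flow_region Vi Vk g b lo hi) p ->
  exists th, lo <= th <= hi /\ line_Pik Vi Vk g b th <= p.1 /\ line_Pki Vi Vk g b th <= p.2.
Proof.
move=> vi vk g0 b0 HP [k [wt [q [w0 [w1 [qA ->]]]]]] /=.
have [th thP] := choice qA.
set u := line_Pik Vi Vk g b; set w := line_Pki Vi Vk g b.
have qE : forall j, q j = (u (th j), w (th j)) by move=> j; case: (thP j).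
have thI : forall j, lo <= th j <= hi by move=> j; case: (thP j).
have kp : (0 < k)%N.
  case: (posnP k) => [k0|//]; subst k.
  by move: w1; rewrite big_ord0 => /eqP; rewrite eq_sym oner_eq0.
pose j0 := Ordinal kp.
have := @arg_minP _ R 'I_k j0 xpredT (fun j => u (th j)) isT; case=> jm _ hm.
have := @arg_maxP _ R 'I_k j0 xpredT (fun j => u (th j)) isT; case=> jM _ hM.
set p1 := \sum_(j < k) wt j * (q j).1.
set p2 := \sum_(j < k) wt j * (q j).2.
have p1E : p1 = \sum_(j < k) wt j * u (th j) by apply: eq_bigr => j _; rewrite qE.
have p2E : p2 = \sum_(j < k) wt j * w (th j) by apply: eq_bigr => j _; rewrite qE.
have cst : forall c, \sum_(j < k) wt j * c = c.
  by move=> c; rewrite -mulr_suml w1 mul1r.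
have lo1 : u (th jm) <= p1.
  rewrite p1E -{1}(cst (u (th jm))); apply: ler_sum => j _.
  by apply: ler_wpM2l => //; apply: hm.
have hi1 : p1 <= u (th jM).
  rewrite p1E -[X in _ <= X](cst (u (th jM))); apply: ler_sum => j _.
  by apply: ler_wpM2l => //; apply: hM.
have [ts [tsI tsE]] : exists ts, Num.min (th jm) (th jM) <= ts <= Num.max (th jm) (th jM) /\ u ts = p1.
  apply: ivt2; first exact: cont_Pik.
  apply/andP; split; first by rewrite ge_min lo1.
  by rewrite le_max hi1 orbT.
have tsI' : lo <= ts <= hi.
  move: tsI => /andP[t1 t2]; apply/andP; split.
    by apply: le_trans t1; rewrite le_min; case/andP: (thI jm) => -> _; case/andP: (thI jM) => -> _.
  by apply: le_trans t2 _; rewrite ge_max; case/andP: (thI jm) => _ ->; case/andP: (thI jM) => _ ->.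
exists ts; split=> //; split; first by rewrite tsE.
have [cpos [[gz bz]|[D1 D2]]] := HP ts tsI'.
- have wc : forall t, w t = w ts by move=> t; rewrite /w /line_Pki gz bz; ring.
  by rewrite p2E; under eq_bigr do rewrite wc; rewrite cst.
- have Dp : 0 < g * sin ts + b * cos ts by lra.
  have A : 0 <= Vi * Vk by apply: mulr_ge0; apply: ltW.
  have S : 0 <= \sum_(j < k) wt j * ((g * sin ts + b * cos ts) * w (th j) +
        (b * cos ts - g * sin ts) * u (th j) +
        - ((g * sin ts + b * cos ts) * w ts + (b * cos ts - g * sin ts) * u ts)).
    apply: sumr_ge0 => j _; apply: mulr_ge0 => //.
    have := support (th j) ts A g0 b0; rewrite -/u -/w.
    by move=> h; apply: le_trans h _; rewrite le_eqVlt; apply/orP; left; apply/eqP; ring.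
  rewrite sum_aff // -p1E -p2E tsE in S.
  have E : (g * sin ts + b * cos ts) * (p2 - w ts) =
    (g * sin ts + b * cos ts) * p2 + (b * cos ts - g * sin ts) * p1 -
    ((g * sin ts + b * cos ts) * w ts + (b * cos ts - g * sin ts) * p1) by ring.
  by move: S; rewrite -E pmulr_rge0 // subr_ge0.
Qed.
End A.
Section G.
Local Close Scope classical_set_scope.
Variable R : realType.
Variables (n m : nat) (ends : 'I_m -> 'I_n * 'I_n).
Variable r : 'I_n.

Lemma adjC x y : adj ends x y = adj ends y x.
Proof.
rewrite /adj; apply/existsP/existsP => -[j hj]; exists j; by rewrite orbC.
Qed.

Fixpoint reach (k : nat) : {set 'I_n} :=
  if k is k'.+1 then reach k' :|: [set y | [exists x in reach k', adj ends x y]]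
  else [set r].

Lemma reach_mono k k' : (k <= k')%N -> reach k \subset reach k'.
Proof.
elim: k' => [|k' IH] hk.
  by rewrite leqn0 in hk; move/eqP: hk => ->.
rewrite leq_eqVlt ltnS in hk; case/orP: hk => [/eqP -> //|hk].
apply: (fintype.subset_trans (IH hk)); rewrite [reach k'.+1]/=; exact: finset.subsetUl.
Qed.

Lemma reach_adj k x y : x \in reach k -> adj ends x y -> y \in reach k.+1.
Proof. by move=> hx hy; rewrite /= inE; apply/orP; right; rewrite inE; apply/existsP; exists x; rewrite hx. Qed.

Lemma reach_path p k x : x \in reach k -> path (adj ends) x p -> last x p \in reach (k + size p).
Proof.
elim: p k x => [|y p IH] k x hx /=; first by rewrite addn0.
case/andP=> hxy hp; rewrite addnS -addSn; apply: IH hp.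
exact: reach_adj hx hxy.
Qed.

Hypothesis conn : forall v, connect (adj ends) r v.

Lemma reach_ex v : exists k, v \in reach k.
Proof.
have /connectP[p hp ->] := conn v; exists (0 + size p)%N.
by apply: reach_path => //; rewrite /= inE.
Qed.

Definition dist v := ex_minn (reach_ex v).

Lemma dist_in v : v \in reach (dist v).
Proof. by rewrite /dist; case: ex_minnP. Qed.

Lemma dist_min v k : v \in reach k -> (dist v <= k)%N.
Proof. by rewrite /dist; case: ex_minnP => d _ h /h. Qed.

Lemma dist_adj x y : adj ends x y -> (dist y <= (dist x).+1)%N.
Proof. by move=> h; apply: dist_min; apply: reach_adj (dist_in x) h. Qed.

Lemma dist_r : dist r = 0%N.
Proof. by apply/eqP; rewrite -leqn0; apply: dist_min; rewrite /= inE. Qed.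

Lemma dist_par v : v != r -> exists x, adj ends x v /\ (dist x).+1 = dist v.
Proof.
move=> vr.
have hv := dist_in v.
case E : (dist v) hv => [|k] /=.
  by rewrite inE => /eqP; move/eqP: vr.
rewrite inE => /orP[hk|].
  by have := dist_min hk; rewrite E ltnn.
rewrite inE => /existsP[x /andP[hx hxv]].
exists x; split=> //.
have dx := dist_min hx.
apply/eqP; rewrite eqSS eqn_leq dx /=.
rewrite leqNgt; apply/negP => lt.
have : v \in reach k.
  apply: (fintype.subsetP (reach_mono lt)); exact: reach_adj (dist_in x) hxv.
by move/dist_min; rewrite E ltnn.
Qed.

Lemma tree_leaf (hmn : m.+1 = n) (S : {set 'I_m}) : S != finset.set0 ->
  exists l e, e \in S /\ (exists x, x != l /\ (ends e = (l, x) \/ ends e = (x, l))) /\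
    forall j, j \in S -> j != e -> (ends j).1 != l /\ (ends j).2 != l.
Proof.
case/set0Pn=> e0 e0S.
pose P v j := exists x, (dist x).+1 = dist v /\ (ends j = (x, v) \/ ends j = (v, x)).
have hP : forall v, exists j, v != r -> P v j.
  move=> v; have [vr|vr] := eqVneq v r; first by exists e0.
  have [x [hx dx]] := dist_par vr.
  case/existsP: hx => j hj; exists j => _; exists x; split=> //.
  by case/orP: hj => /eqP ->; [left|right].
have [pe peP] := choice hP.
have inj : {in [set~ r] &, injective pe}.
  move=> v v'; rewrite !inE => vr v'r e.
  have [x [dx ex]] := peP v vr; have [x' [dx' ex']] := peP v' v'r.
  rewrite e in ex; apply/eqP; apply/negP => /negP nvv.
  case: ex => h; case: ex' => h'; rewrite h in h'; case: h' => h1 h2.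
  - by move: nvv; rewrite h2 eqxx.
  - by move: dx dx'; rewrite h1 h2; lia.
  - by move: dx dx'; rewrite h1 h2; lia.
  - by move: nvv; rewrite h1 eqxx.
have onto : forall j, exists v, v != r /\ pe v = j.
  move=> j.
  have : pe @: [set~ r] == [set: 'I_m].
    rewrite eqEcard finset.subsetT /= card_in_imset // cardsC1 !card_ord -hmn.
    by rewrite cardsT card_ord.
  move/eqP=> eqT; have : j \in pe @: [set~ r] by rewrite eqT inE.
  by case/imsetP=> v; rewrite !inE => vr ->; exists v; split.
have [ch chP] := choice onto.
have := @arg_maxnP _ e0 (fun j => j \in S) (fun j => dist (ch j)) e0S.
case=> e eS hmax.
exists (ch e), e; split=> //.
have [cr ce] := chP e.
have [x [dx ex]] := peP _ cr; rewrite ce in ex.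
split.
  exists x; split; last by case: ex; [right|left].
  by apply/eqP => exl; move: dx; rewrite exl; lia.
move=> j jS je.
have [cjr cje] := chP j.
have [y [dy ey]] := peP _ cjr; rewrite cje in ey.
have hj := hmax j jS; rewrite /= in hj.
have ne1 : ch j != ch e.
  by apply/eqP => h; move/eqP: je; apply; rewrite -cje -ce h.
have ne2 : y != ch e by apply/eqP => h; move: hj dy; rewrite h; lia.
by case: ey => ->; split.
Qed.
End G.
Section T.
Variable R : realType.
Lemma ivt2' (f : R -> R) (a b v : R) : continuous f ->
  Num.min (f a) (f b) <= v <= Num.max (f a) (f b) ->
  exists c, Num.min a b <= c <= Num.max a b /\ f c = v.
Proof.
move=> cf hv.
have cw : forall x y : R, {within `[x, y], continuous f}.
  by move=> x y; apply: continuous_subspaceT => z; exact: cf.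
have [ab|ba] := leP a b.
- have := IVT ab (cw a b) hv; case=> c cin fc.
  by exists c; split=> //.
- have ba' := ltW ba.
  have hv' : Num.min (f b) (f a) <= v <= Num.max (f b) (f a) by rewrite minC maxC.
  have := IVT ba' (cw b a) hv'; case=> c cin fc.
  by exists c; split=> //.
Qed.

Definition opp_mono (lo hi : R) (phi psi : R -> R) :=
  (forall t t', lo <= t -> t <= t' -> t' <= hi -> phi t <= phi t' /\ psi t' <= psi t) \/
  (forall t t', lo <= t -> t <= t' -> t' <= hi -> phi t' <= phi t /\ psi t <= psi t').

Lemma L2 (lo hi al bl c d : R) (phi psi : R -> R) (tA tB : R) :
  continuous psi -> opp_mono lo hi phi psi ->
  lo <= tA <= hi -> lo <= tB <= hi ->
  al <= phi tA <= bl -> al <= phi tB <= bl ->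
  c <= d -> c <= Num.max (psi tA) (psi tB) -> Num.min (psi tA) (psi tB) <= d ->
  exists t, lo <= t <= hi /\ al <= phi t <= bl /\ c <= psi t <= d.
Proof.
move=> cpsi om hA hB pA pB cd chi lod.
have [clo|loc] := leP c (Num.min (psi tA) (psi tB)).
  have [h|h] := leP (psi tA) (psi tB).
  - exists tA; split=> //; split=> //; move: clo lod; rewrite (min_idPl h) => -> -> //.
  - have h' := ltW h; exists tB; split=> //; split=> //; move: clo lod; rewrite (min_idPr h') => -> -> //.
have [hid|dhi] := leP (Num.max (psi tA) (psi tB)) d.
  have [h|h] := leP (psi tA) (psi tB).
  - exists tB; split=> //; split=> //; move: chi hid; rewrite (max_idPr h) => -> -> //.
  - have h' := ltW h; exists tA; split=> //; split=> //; move: chi hid; rewrite (max_idPl h') => -> -> //.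
have hv : Num.min (psi tA) (psi tB) <= c <= Num.max (psi tA) (psi tB).
  by rewrite (ltW loc) chi.
have [t [tI tE]] := ivt2' cpsi hv.
have tbox : lo <= t <= hi.
  move: tI hA hB => /andP[t1 t2] /andP[a1 a2] /andP[b1 b2]; apply/andP; split.
    by apply: le_trans t1; rewrite le_min a1 b1.
  by apply: le_trans t2 _; rewrite ge_max a2 b2.
exists t; split=> //; split; last by rewrite tE lexx cd.
move: tI hA hB pA pB => /andP[t1 t2] /andP[a1 a2] /andP[b1 b2] /andP[pa1 pa2] /andP[pb1 pb2].
have [ab|ba] := leP tA tB.
- move: t1 t2; rewrite (min_idPl ab) (max_idPr ab) => t1 t2.
  case: om => om.
  + have [h1 _] := om _ _ a1 t1 (le_trans t2 b2); have [h2 _] := om _ _ (le_trans a1 t1) t2 b2.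
    by rewrite (le_trans pa1 h1) (le_trans h2 pb2).
  + have [h1 _] := om _ _ a1 t1 (le_trans t2 b2); have [h2 _] := om _ _ (le_trans a1 t1) t2 b2.
    by rewrite (le_trans pb1 h2) (le_trans h1 pa2).
- have ab := ltW ba; move: t1 t2; rewrite (min_idPr ab) (max_idPl ab) => t1 t2.
  case: om => om.
  + have [h1 _] := om _ _ b1 t1 (le_trans t2 a2); have [h2 _] := om _ _ (le_trans b1 t1) t2 a2.
    by rewrite (le_trans pb1 h1) (le_trans h2 pa2).
  + have [h1 _] := om _ _ b1 t1 (le_trans t2 a2); have [h2 _] := om _ _ (le_trans b1 t1) t2 a2.
    by rewrite (le_trans pa1 h2) (le_trans h1 pb2).
Qed.

Lemma om_AM lo hi phi psi s s' : opp_mono lo hi phi psi ->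
  lo <= s <= hi -> lo <= s' <= hi -> phi s < phi s' -> psi s' <= psi s.
Proof.
move=> om /andP[s1 s2] /andP[s1' s2'] lt.
case: om => om; have [h|h] := leP s s'.
- by have [_ ->] := om _ _ s1 h s2'.
- by have [h1 _] := om _ _ s1' (ltW h) s2; move: lt; rewrite ltNge h1.
- by have [h1 _] := om _ _ s1 h s2'; move: lt; rewrite ltNge h1.
- by have [_ ->] := om _ _ s1' (ltW h) s2.
Qed.

Lemma L1 (lo hi al bl : R) (phi psi : R -> R) (t0 t1 : R) :
  continuous phi -> opp_mono lo hi phi psi ->
  lo <= t0 <= hi -> lo <= t1 <= hi -> al <= bl -> al <= phi t0 -> phi t1 <= bl ->
  exists tA tB, [/\ lo <= tA <= hi, al <= phi tA <= bl & psi t0 <= psi tA] /\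
      [/\ lo <= tB <= hi, al <= phi tB <= bl & psi tB <= psi t1].
Proof.
move=> cphi om h0 h1 ab p0 p1.
have [tm [tmI tmP]] : exists tm, lo <= tm <= hi /\ al <= phi tm <= bl.
  have [q1|q1] := leP al (phi t1); first by exists t1; rewrite q1 p1.
  have [q0|q0] := leP (phi t0) bl; first by exists t0; rewrite q0 p0.
  have hv : Num.min (phi t0) (phi t1) <= al <= Num.max (phi t0) (phi t1).
    apply/andP; split; first by rewrite ge_min (ltW q1) orbT.
    by rewrite le_max (le_trans ab (ltW q0)).
  have [t [tI tE]] := ivt2' cphi hv.
  exists t; rewrite tE lexx ab; split=> //.
  move: tI h0 h1 => /andP[t1' t2] /andP[a1 a2] /andP[b1 b2]; apply/andP; split.
    by apply: le_trans t1'; rewrite le_min a1 b1.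
  by apply: le_trans t2 _; rewrite ge_max a2 b2.
have [tA [hA1 hA2 hA3]] : exists tA, [/\ lo <= tA <= hi, al <= phi tA <= bl & psi t0 <= psi tA].
  have [q0|q0] := leP (phi t0) bl; first by exists t0; rewrite q0 p0 lexx.
  exists tm; split=> //; apply: om_AM om tmI h0 _.
  by case/andP: tmP => _ h; apply: le_lt_trans h q0.
have [tB [hB1 hB2 hB3]] : exists tB, [/\ lo <= tB <= hi, al <= phi tB <= bl & psi tB <= psi t1].
  have [q1|q1] := leP al (phi t1); first by exists t1; rewrite q1 p1 lexx.
  exists tm; split=> //; apply: om_AM om h1 tmI _.
  by case/andP: tmP => h _; apply: lt_le_trans q1 h.
by exists tA, tB.
Qed.

Lemma minle_max (x y : R) : Num.min x y <= Num.max x y.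
Proof.
by rewrite ge_min !le_max !lexx.
Qed.

Section Net.
Local Close Scope classical_set_scope.
Variables (n m : nat) (ends : 'I_m -> 'I_n * 'I_n).
Variables (lo hi : 'I_m -> R) (u w : 'I_m -> R -> R).

Definition cterm (th : 'I_m -> R) (i : 'I_n) (j : 'I_m) : R :=
  (if (ends j).1 == i then u j (th j) else 0) + (if (ends j).2 == i then w j (th j) else 0).
Definition NS (S : {set 'I_m}) th i := \sum_(j in S) cterm th i j.
Definition box (th : 'I_m -> R) := forall j, lo j <= th j <= hi j.

Hypothesis cu : forall j, continuous (u j).
Hypothesis cw : forall j, continuous (w j).
Hypothesis mono : forall j t t', lo j <= t -> t <= t' -> t' <= hi j ->
  u j t <= u j t' /\ w j t' <= w j t.
Hypothesis leaf : forall S : {set 'I_m}, S != finset.set0 ->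
  exists l e, e \in S /\ (exists x, x != l /\ (ends e = (l, x) \/ ends e = (x, l))) /\
    forall j, j \in S -> j != e -> (ends j).1 != l /\ (ends j).2 != l.

Lemma NS0 (th : 'I_m -> R) (i : 'I_n) : NS finset.set0 th i = 0.
Proof. by rewrite /NS big_set0. Qed.

Lemma NSD1 (S : {set 'I_m}) (e : 'I_m) (th : 'I_m -> R) (i : 'I_n) : e \in S -> NS S th i = cterm th i e + NS (S :\ e) th i.
Proof. by move=> eS; rewrite /NS (big_setD1 e eS). Qed.

Lemma NS_upd (S : {set 'I_m}) (e : 'I_m) (th : 'I_m -> R) (t : R) (i : 'I_n) : e \notin S ->
  NS S (fun j => if j == e then t else th j) i = NS S th i.
Proof.
move=> eS; apply: eq_bigr => j jS; rewrite /cterm.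
have -> : (j == e) = false by apply/negP => /eqP h; move: eS; rewrite -h jS.
by [].
Qed.

Theorem flowT : forall (S : {set 'I_m}) (a b : 'I_n -> R), (forall i, a i <= b i) ->
  (exists th0, box th0 /\ forall i, a i <= NS S th0 i) ->
  (exists th1, box th1 /\ forall i, NS S th1 i <= b i) ->
  exists th, box th /\ forall i, a i <= NS S th i <= b i.
Proof.
move=> S; have [k hk] : exists k, (#|S| <= k)%N by exists #|S|.
elim: k S hk => [|k IH] S hk a b ab [th0 [bx0 h0]] [th1 [bx1 h1]].
  have S0 : S = finset.set0 by apply/eqP; rewrite -cards_eq0 -leqn0.
  exists th0; split=> // i; rewrite h0 /=; move: (h1 i); by rewrite S0 !NS0.
have [S0|Sn0] := eqVneq S finset.set0.
  exists th0; split=> // i; rewrite h0 /=; move: (h1 i); by rewrite S0 !NS0.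
have [l [e [eS [[x [xl hex]] hleaf]]]] := leaf Sn0.
set S' := S :\ e.
have hk' : (#|S'| <= k)%N.
  by move: hk; rewrite (cardsD1 e S) eS add1n ltnS.
have eS' : e \notin S' by rewrite !inE eqxx.
pose phi := if (ends e).1 == l then u e else w e.
pose psi := if (ends e).1 == l then w e else u e.
have lx : (l == x) = false by apply/negP => /eqP h; move: xl; rewrite h eqxx.
have xl' : (x == l) = false by apply/negP => /eqP h; move: xl; rewrite h eqxx.
have cte : forall th i, cterm th i e =
    if i == l then phi (th e) else if i == x then psi (th e) else 0.
  move=> th i; rewrite /cterm /phi /psi.
  case: (eqVneq i l) => [->|il]; [|case: (eqVneq i x) => [->|ix]];
  case: hex => -> /=; rewrite ?eqxx ?xl' ?lx ?addr0 ?add0r //;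
  rewrite ?(eq_sym l i) ?(eq_sym x i) ?(negbTE il) ?(negbTE ix) ?addr0 //.
have NSl : forall th, NS S' th l = 0.
  move=> th; rewrite /NS big1 // => j jS'.
  have jS : j \in S by move: jS'; rewrite !inE => /andP[].
  have je : j != e by move: jS'; rewrite !inE => /andP[].
  have [q1 q2] := hleaf j jS je.
  by rewrite /cterm (negbTE q1) (negbTE q2) addr0.
have NSdec : forall th i, NS S th i = cterm th i e + NS S' th i by move=> th i; apply: NSD1.
have om : opp_mono (lo e) (hi e) phi psi.
  rewrite /opp_mono /phi /psi; case: ifP => _; [left|right] => t t' z1 z2 z3;
    have [m1 m2] := mono z1 z2 z3; by split.
have cphi : continuous phi by rewrite /phi; case: ifP.
have cpsi : continuous psi by rewrite /psi; case: ifP.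
have p0 : a l <= phi (th0 e).
  by have := h0 l; rewrite NSdec cte eqxx NSl addr0.
have p1 : phi (th1 e) <= b l.
  by have := h1 l; rewrite NSdec cte eqxx NSl addr0.
have [tA [tB [[hA1 hA2 hA3] [hB1 hB2 hB3]]]] := L1 cphi om (bx0 e) (bx1 e) (ab l) p0 p1.
set hiv := Num.max (psi tA) (psi tB).
set lov := Num.min (psi tA) (psi tB).
pose a' i := if i == l then 0 else if i == x then a x - hiv else a i.
pose b' i := if i == l then 0 else if i == x then b x - lov else b i.
have ab' : forall i, a' i <= b' i.
  move=> i; rewrite /a' /b'; case: ifP => // _; case: ifP => // _.
  apply: lerB => //; rewrite /lov /hiv.
  exact: minle_max.
have [th' [bx' h']] : exists th, box th /\ forall i, a' i <= NS S' th i <= b' i.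
  apply: IH => //.
  - exists th0; split=> // i; rewrite /a' /=.
    case: (eqVneq i l) => [->|il]; first by rewrite NSl.
    case: (eqVneq i x) => [->|ix].
      have := h0 x; rewrite NSdec cte xl' eqxx /=.
      have : psi (th0 e) <= hiv by apply: le_trans hA3 _; rewrite le_max lexx.
      lra.
    by have := h0 i; rewrite NSdec cte (negbTE il) (negbTE ix) add0r.
  - exists th1; split=> // i; rewrite /b' /=.
    case: (eqVneq i l) => [->|il]; first by rewrite NSl.
    case: (eqVneq i x) => [->|ix].
      have := h1 x; rewrite NSdec cte xl' eqxx /=.
      have : lov <= psi (th1 e) by apply: le_trans hB3; rewrite ge_min lexx orbT.
      lra.
    by have := h1 i; rewrite NSdec cte (negbTE il) (negbTE ix) add0r.
set r := NS S' th' x.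
have hx := h' x; rewrite /a' /b' /= xl' eqxx /= in hx.
have [t [tI [tphi tpsi]]] : exists t, lo e <= t <= hi e /\ a l <= phi t <= b l /\
    a x - r <= psi t <= b x - r.
  apply: (L2 cpsi om hA1 hB1 hA2 hB2); move: (ab x) hx; rewrite -/r /hiv /lov => abx /andP[hx1 hx2]; lra.
exists (fun j => if j == e then t else th' j); split.
  by move=> j; case: eqP => [->|_]; [exact: tI| exact: bx'].
move=> i; rewrite NSdec NS_upd // cte eqxx.
case: (eqVneq i l) => [->|il]; first by rewrite NSl addr0.
case: (eqVneq i x) => [->|ix]; first by rewrite -/r; move: tpsi; lra.
rewrite add0r; have := h' i; by rewrite /a' /b' (negbTE il) (negbTE ix).
Qed.
End Net.
End T.
Section Ana.
Variable R : realType.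

Lemma le_eps (x y c : R) : 0 <= c -> (forall e, 0 < e -> x <= y + e * c) -> x <= y.
Proof.
move=> c0 H; apply/ler_addgt0Pr => e ep.
have c1 : 0 < c + 1 by lra.
have := H (e / (c + 1)) (divr_gt0 ep c1).
move=> h; apply: le_trans h _; rewrite lerD2l.
rewrite mulrAC ler_pdivrMr // ler_pM2l //; lra.
Qed.

Lemma is_inf_uniq (A : set R) v v' : is_inf A v -> is_inf A v' -> v = v'.
Proof.
move=> [l1 a1] [l2 a2]; apply/eqP; rewrite eq_le; apply/andP; split.
- apply/ler_addgt0Pr => e ep; have [a [Aa lt]] := a2 e ep.
  by apply: le_trans (l1 _ Aa) (ltW lt).
- apply/ler_addgt0Pr => e ep; have [a [Aa lt]] := a1 e ep.
  by apply: le_trans (l2 _ Aa) (ltW lt).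
Qed.

Lemma opt_lb T (S : set T) (obj : T -> R) (v : R) z : opt_value S obj v -> S z -> v <= obj z.
Proof. by move=> [l _] Sz; apply: l; exists z. Qed.

Lemma opt_approx T (S : set T) (obj : T -> R) (v : R) e : opt_value S obj v -> 0 < e ->
  exists z, S z /\ obj z < v + e.
Proof. by move=> [_ a] ep; have [y [[z [Sz ->]] lt]] := a e ep; exists z. Qed.

Lemma opt_ne T (S : set T) (obj : T -> R) (v : R) : opt_value S obj v -> exists z, S z.
Proof. by move=> h; have [z [Sz _]] := opt_approx h (@ltr01 R); exists z. Qed.

Lemma opt_intro T (S : set T) (obj : T -> R) (v : R) : (forall z, S z -> v <= obj z) ->
  (forall e, 0 < e -> exists z, S z /\ obj z < v + e) -> opt_value S obj v.
Proof.
move=> l a; split; first by move=> y [z [Sz ->]]; apply: l.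
by move=> e ep; have [z [Sz lt]] := a e ep; exists (obj z); split=> //; exists z.
Qed.

Lemma bigmax_le n (F : 'I_n -> R) c : 0 <= c -> (forall i, F i <= c) ->
  \big[Num.max/0]_(i < n) F i <= c.
Proof.
move=> c0 H; elim/big_ind: _ => // x y hx hy.
by rewrite ge_max hx hy.
Qed.

Lemma sum_single n (lam : 'I_n -> R) i s :
  \sum_(k < n) lam k * (if k == i then s else 0) = lam i * s.
Proof.
rewrite (bigD1 i) //= eqxx big1 ?addr0 // => k /negbTE ->; by rewrite mulr0.
Qed.

Section Main.
Variables (n m : nat) (ends : 'I_m -> 'I_n * 'I_n) (Plo Phi PD : 'I_n -> R)
  (f : 'I_n -> R -> R) (lam : 'I_n -> R) (F cF : 'I_m -> set (R * R)).
Hypothesis fmono : forall i x y, x <= y -> f i x <= f i y.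
Hypothesis fconv : forall i x y t, 0 <= t <= 1 ->
     f i (t * x + (1 - t) * y) <= t * f i x + (1 - t) * f i y.
Hypothesis Fsub : forall j p, F j p -> cF j p.
Hypothesis cFconv : forall j p q t, 0 <= t <= 1 -> cF j p -> F j q ->
  cF j (t * p.1 + (1 - t) * q.1, t * p.2 + (1 - t) * q.2).
Hypothesis G : forall (L P : 'I_n -> R) (x : 'I_m -> R * R),
  (exists z0, opf_feasible ends Plo Phi L F z0) ->
  (forall i, Plo i <= P i <= Phi i) -> (forall j, cF j (x j)) ->
  (forall i, net_flow ends x i <= P i - L i) ->
  exists z', opf_feasible ends Plo Phi L F z' /\ forall i, z'.1 i <= P i.
Hypothesis lmp : is_lmp ends Plo Phi PD F f lam.

Lemma cost_mono (z z' : ('I_n -> R) * ('I_m -> R * R)) :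
  (forall i, z'.1 i <= z.1 i) -> cost f z' <= cost f z.
Proof. by move=> h; apply: ler_sum => i _; apply: fmono. Qed.

Lemma net_comb (x x0 : 'I_m -> R * R) t i :
  net_flow ends (fun j => (t * (x j).1 + (1 - t) * (x0 j).1, t * (x j).2 + (1 - t) * (x0 j).2)) i
  = t * net_flow ends x i + (1 - t) * net_flow ends x0 i.
Proof.
rewrite /net_flow !big_split /= !mulrDr !mulr_sumr.
ring.
Qed.

Lemma lagE mu (z : ('I_n -> R) * ('I_m -> R * R)) :
  lagrangian ends f PD mu z = cost f z - \sum_(i < n) mu i * (z.1 i - PD i - net_flow ends z.2 i).
Proof.
rewrite /lagrangian -sumrN; congr (_ + _).
apply: eq_bigr => i _; ring.
Qed.

Lemma abs_le_sum (eps : 'I_n -> R) i : `|eps i| <= \sum_(k < n) `|eps k|.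
Proof.
rewrite (bigD1 i) //= lerDl; apply: sumr_ge0 => k _; exact: normr_ge0.
Qed.

Lemma cost_comb (z z0 : ('I_n -> R) * ('I_m -> R * R)) t : 0 <= t <= 1 ->
  cost f ((fun i => t * z.1 i + (1 - t) * z0.1 i), z.2) <= t * cost f z + (1 - t) * cost f z0.
Proof.
move=> t01; rewrite /cost /= !mulr_sumr -big_split /=.
by apply: ler_sum => i _; apply: fconv.
Qed.

Lemma lag_lb f0 : opt_value (opf_feasible ends Plo Phi PD F) (cost f) f0 ->
  forall z : ('I_n -> R) * ('I_m -> R * R), (forall i, Plo i <= z.1 i <= Phi i) ->
  (forall j, cF j (z.2 j)) -> f0 <= lagrangian ends f PD lam z.
Proof.
move=> hf0 z hb hF.
have [f0' [h0 hd]] := lmp.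
have ef : f0' = f0 by apply: is_inf_uniq h0 hf0.
subst f0'.
set eps := fun i => z.1 i - PD i - net_flow ends z.2 i.
rewrite lagE -/eps.
set Lam := \sum_(i < n) lam i * eps i.
set M := \sum_(i < n) `|eps i|.
have M0 : 0 <= M by apply: sumr_ge0 => i _; exact: normr_ge0.
apply: (@le_eps _ _ (M + 1)); first lra.
move=> e ep.
have [d [dp hd']] := hd e ep.
set t := Num.min 1 (d / (M + 1)).
have M1 : 0 < M + 1 by lra.
have tp : 0 < t by rewrite lt_min ltr01 divr_gt0.
have t1 : t <= 1 by rewrite ge_min lexx.
have tdM : t * (M + 1) <= d.
  by rewrite -ler_pdivlMr // ge_min lexx orbT.
have hsmall : forall i, `|t * eps i| < d.
  move=> i; rewrite normrM gtr0_norm //.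
  have := abs_le_sum eps i; rewrite -/M => h.
  have : t * `|eps i| <= t * M by rewrite ler_pM2l.
  nra.
have [v [hv hvb]] := hd' (fun i => t * eps i) hsmall.
have te : 0 < t * e by apply: mulr_gt0.
have [z0 [fz0 cz0]] := opt_approx hf0 te.
have [hb0 [hbal0 hF0]] := fz0.
pose zt : ('I_n -> R) * ('I_m -> R * R) :=
  (fun i => t * z.1 i + (1 - t) * z0.1 i,
   fun j => (t * (z.2 j).1 + (1 - t) * (z0.2 j).1, t * (z.2 j).2 + (1 - t) * (z0.2 j).2)).
have t01 : 0 <= t <= 1 by rewrite (ltW tp) t1.
have [z' [fz' le']] : exists z', opf_feasible ends Plo Phi (fun i => PD i + t * eps i) F z' /\
    forall i, z'.1 i <= zt.1 i.
  apply: G.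
  - exact: (opt_ne hv).
  - move=> i; have /andP[a1 a2] := hb i; have /andP[b1 b2] := hb0 i; rewrite /zt /=.
    have q1 : 0 <= t * (z.1 i - Plo i) by apply: mulr_ge0; lra.
    have q2 : 0 <= (1 - t) * (z0.1 i - Plo i) by apply: mulr_ge0; lra.
    have q3 : 0 <= t * (Phi i - z.1 i) by apply: mulr_ge0; lra.
    have q4 : 0 <= (1 - t) * (Phi i - z0.1 i) by apply: mulr_ge0; lra.
    apply/andP; split; nra.
  - by move=> j; rewrite /zt /=; apply: cFconv; [exact: t01 | exact: hF | exact: hF0].
  - move=> i; rewrite /zt net_comb /= -hbal0 /eps /=.
    rewrite le_eqVlt; apply/orP; left; apply/eqP; ring.
have c1 : v <= cost f zt.
  apply: le_trans (opt_lb hv fz') _; apply: cost_mono => i; exact: le'.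
have c2 : cost f zt <= t * cost f z + (1 - t) * cost f z0 by apply: cost_comb.
have c3 : (1 - t) * cost f z0 <= (1 - t) * (f0 + t * e).
  by apply: ler_wpM2l; [lra | apply: ltW].
have bm : \big[Num.max/0]_(i < n) `|t * eps i| <= t * M.
  apply: bigmax_le; first by apply: mulr_ge0; lra.
  move=> i; rewrite normrM gtr0_norm // ler_pM2l //; exact: abs_le_sum.
have sl : \sum_(i < n) lam i * (t * eps i) = t * Lam.
  by rewrite /Lam mulr_sumr; apply: eq_bigr => i _; ring.
rewrite sl in hvb.
have hv2 : f0 + t * Lam - e * (t * M) <= v.
  move: hvb; rewrite ler_norml => /andP[h1 _].
  have : e * \big[Num.max/0]_(i < n) `|t * eps i| <= e * (t * M) by rewrite ler_pM2l.
  lra.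
have key : 0 <= t * (cost f z - Lam + e * (M + 1) - f0).
  have tt : 0 <= t * t * e by apply: mulr_ge0 => //; [apply: mulr_ge0; lra | lra].
  nra.
by move: key; rewrite pmulr_rge0 // => h; lra.
Qed.

Lemma conv_opt f0 : opt_value (opf_feasible ends Plo Phi PD F) (cost f) f0 ->
  opt_value (opf_feasible ends Plo Phi PD cF) (cost f) f0.
Proof.
move=> hf0; apply: opt_intro.
- move=> z [hb [hbal hF]].
  have hn : forall i, net_flow ends z.2 i <= z.1 i - PD i by move=> i; rewrite (hbal i).
  have [z' [fz' le']] := G (opt_ne hf0) hb hF hn.
  by apply: le_trans (opt_lb hf0 fz') _; apply: cost_mono.
- move=> e ep; have [z [[hb [hbal hF]] lt]] := opt_approx hf0 ep.
  by exists z; split=> //; split=> //; split=> // j; apply: Fsub.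
Qed.


Lemma dir f0 (hf0 : opt_value (opf_feasible ends Plo Phi PD F) (cost f) f0) i e : 0 < e ->
  exists d, 0 < d /\ forall s, `|s| < d ->
    exists v, opt_value (opf_feasible ends Plo Phi (fun k => PD k + (if k == i then s else 0)) F) (cost f) v
      /\ v <= f0 + lam i * s + e * `|s| /\ f0 + lam i * s - e * `|s| <= v.
Proof.
move=> ep.
have [f0' [h0 hd]] := lmp.
have ef : f0' = f0 by apply: is_inf_uniq h0 hf0.
subst f0'.
have [d [dp hd']] := hd e ep.
exists d; split=> // s hs.
have small : forall k, `|(if k == i then s else 0)| < d.
  by move=> k; case: ifP => _ //; rewrite normr0.
have [v [hv hb]] := hd' _ small.
exists v; split=> //.
rewrite sum_single in hb.
have bm : \big[Num.max/0]_(k < n) `|(if k == i then s else 0)| <= `|s|.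
  apply: bigmax_le => // k; case: ifP => _ //; rewrite normr0 //.
have : e * \big[Num.max/0]_(k < n) `|(if k == i then s else 0)| <= e * `|s| by rewrite ler_pM2l.
move: hb; rewrite ler_norml => /andP[h1 h2] h3.
split; lra.
Qed.

Lemma uniq_mu f0 (hf0 : opt_value (opf_feasible ends Plo Phi PD F) (cost f) f0) mu :
  is_balance_multiplier ends Plo Phi PD cF f mu -> forall i, lam i = mu i.
Proof.
move=> [v [hv [hL _]]] i.
have vf : v = f0 by apply: is_inf_uniq hv (conv_opt hf0).
subst v.
have key : forall e, 0 < e -> exists d, 0 < d /\ forall s, `|s| < d -> mu i * s <= lam i * s + e * `|s|.
  move=> e ep; have [d [dp hd]] := dir hf0 i ep.
  exists d; split=> // s hs.
  have [v [hv' [hv1 hv2]]] := hd s hs.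
  have lb : f0 + mu i * s <= v.
    apply/ler_addgt0Pr => eta etap.
    have [z [[hb [hbal hF]] lt]] := opt_approx hv' etap.
    have hz : f0 <= lagrangian ends f PD mu z.
      apply: hL; exists z; split=> //; split=> // j; exact: Fsub.
    rewrite lagE in hz.
    have E : \sum_(k < n) mu k * (z.1 k - PD k - net_flow ends z.2 k) = mu i * s.
      rewrite -(sum_single mu i s); apply: eq_bigr => k _; rewrite -(hbal k); congr (_ * _); case: ifP => _; ring.
    rewrite E in hz.
    lra.
  lra.
apply/eqP; rewrite eq_le; apply/andP; split.
- apply/ler_addgt0Pr => e ep; have [d [dp hd]] := key e ep.
  have hlt : `|- (d / 2)| < d by rewrite normrN gtr0_norm ?divr_gt0 //; lra.
  have h2 := hd _ hlt; rewrite normrN gtr0_norm ?divr_gt0 // in h2.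
  have h3 : 0 <= (mu i + e - lam i) * (d / 2) by move: h2; set D := d / 2; move=> h2; nra.
  by move: h3; rewrite pmulr_lge0 ?divr_gt0 // => h3; lra.
- apply/ler_addgt0Pr => e ep; have [d [dp hd]] := key e ep.
  have hlt : `|d / 2| < d by rewrite gtr0_norm ?divr_gt0 //; lra.
  have h2 := hd _ hlt; rewrite gtr0_norm ?divr_gt0 // in h2.
  have h3 : 0 <= (lam i + e - mu i) * (d / 2) by move: h2; set D := d / 2; move=> h2; nra.
  by move: h3; rewrite pmulr_lge0 ?divr_gt0 // => h3; lra.
Qed.

Lemma lam_ge0 f0 (hf0 : opt_value (opf_feasible ends Plo Phi PD F) (cost f) f0) i : 0 <= lam i.
Proof.
apply/ler_addgt0Pr => e ep.
have [d [dp hd]] := dir hf0 i ep.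
set s := - (d / 2).
have hs : `|s| < d by rewrite /s normrN gtr0_norm ?divr_gt0 //; lra.
have [v [hv [hv1 hv2]]] := hd s hs.
have vf : v <= f0.
  apply/ler_addgt0Pr => eta etap.
  have [z0 [[hb [hbal hF]] lt]] := opt_approx hf0 etap.
  have hn : forall k, net_flow ends z0.2 k <= z0.1 k - (PD k + (if k == i then s else 0)).
    move=> k; rewrite -(hbal k); case: ifP => _; last by rewrite addr0.
    rewrite /s; lra.
  have [z' [fz' le']] := G (opt_ne hv) hb (fun j => Fsub (hF j)) hn.
  have := opt_lb hv fz'; have := cost_mono le'; lra.
have : `|s| = d / 2 by rewrite /s normrN gtr0_norm ?divr_gt0.
move=> ns; rewrite ns /s in hv2.
have h : 0 <= (lam i + e) * (d / 2) by move: hv2 vf; set D := d / 2; nra.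
by move: h; rewrite pmulr_lge0 ?divr_gt0.
Qed.
End Main.
End Ana.

Section Final.
Local Close Scope classical_set_scope.
Variable R : realType.

Lemma hull_sub (A : set (R * R)) p : A p -> convex_hull A p.
Proof.
move=> Ap; exists 1%N, (fun _ => 1), (fun _ => p); split=> //; split; first by rewrite big_ord1.
split=> //; by rewrite !big_ord1 !mul1r; case: p Ap.
Qed.

Lemma hull_comb (A : set (R * R)) p q t : 0 <= t <= 1 -> convex_hull A p -> A q ->
  convex_hull A (t * p.1 + (1 - t) * q.1, t * p.2 + (1 - t) * q.2).
Proof.
move=> /andP[t0 t1] [k [wt [qq [w0 [w1 [qA ->]]]]]] Aq /=.
exists k.+1, (fun j => if unlift ord0 j is Some j' then t * wt j' else 1 - t),
  (fun j => if unlift ord0 j is Some j' then qq j' else q).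
split.
  move=> j; case: (unlift ord0 j) => [j'|]; first by apply: mulr_ge0.
  lra.
split.
  rewrite big_ord_recl unlift_none.
  rewrite (_ : \sum_(i < k) _ = \sum_(i < k) t * wt i); last by apply: eq_bigr => j _; rewrite liftK.
  by rewrite -mulr_sumr w1; ring.
split; first by move=> j; case: (unlift ord0 j).
rewrite !big_ord_recl unlift_none.
by rewrite !mulr_sumr; congr (_, _); rewrite addrC; congr (_ + _);
  apply: eq_bigr => j _; rewrite liftK; ring.
Qed.

Lemma net_exp n m (ends : 'I_m -> 'I_n * 'I_n) (x : 'I_m -> R * R) i :
  net_flow ends x i = \sum_(j < m) ((if (ends j).1 == i then (x j).1 else 0) +
                                    (if (ends j).2 == i then (x j).2 else 0)).
Proof. by rewrite /net_flow big_split /= -!big_mkcond. Qed.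

Lemma NS_net n m (ends : 'I_m -> 'I_n * 'I_n) (u w : 'I_m -> R -> R) th i :
  NS ends u w [set: 'I_m] th i = net_flow ends (fun j => (u j (th j), w j (th j))) i.
Proof.
rewrite net_exp /NS; apply: eq_bigl => j; by rewrite finset.in_setT.
Qed.
End Final.

Theorem theorem2 (R : realType) (n m : nat) (ends : 'I_m -> 'I_n * 'I_n)
  (g b thlo thhi : 'I_m -> R) (V : 'I_n -> R) (Plo Phi PD : 'I_n -> R)
  (f : 'I_n -> R -> R) (lam : 'I_n -> R) :
  is_tree ends ->
  (forall i, 0 < V i) ->
  (forall j, 0 <= g j /\ 0 <= b j) ->
  (forall j, - pi <= thlo j <= 0 /\ 0 <= thhi j <= pi) ->
  (forall j, - arctan_ratio (b j) (g j) < thlo j /\ thlo j <= thhi j /\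
             thhi j < arctan_ratio (b j) (g j)) ->
  (forall i x y, x <= y -> f i x <= f i y) ->
  (forall i x y t, 0 <= t <= 1 ->
     f i (t * x + (1 - t) * y) <= t * f i x + (1 - t) * f i y) ->
  is_lmp ends Plo Phi PD (edge_region ends V g b thlo thhi) f lam ->
  let cF := fun j => convex_hull (edge_region ends V g b thlo thhi j) in
  is_balance_multiplier ends Plo Phi PD cF f lam /\
  (forall mu, is_balance_multiplier ends Plo Phi PD cF f mu ->
     forall i, lam i = mu i) /\
  (forall i, 0 <= lam i).
Proof.
move=> [hmn conn] Vp gb thb tha fmono fconv lmp cF.
set F := edge_region ends V g b thlo thhi in lmp cF *.
pose u := fun j => line_Pik (V (ends j).1) (V (ends j).2) (g j) (b j).
pose w := fun j => line_Pki (V (ends j).1) (V (ends j).2) (g j) (b j).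
have epos : forall j th, thlo j <= th <= thhi j -> 0 < cos th /\ ((g j = 0 /\ b j = 0) \/
       (g j * sin th < b j * cos th /\ - (g j * sin th) < b j * cos th)).
  move=> j th hth; have [g0 b0] := gb j; have [h1 [_ h2]] := tha j.
  exact: edge_pos g0 b0 h1 h2 hth.
have mono : forall j t t', thlo j <= t -> t <= t' -> t' <= thhi j ->
    u j t <= u j t' /\ w j t' <= w j t.
  move=> j t t' h1 h2 h3; have [/andP[p1 _] /andP[_ p2]] := thb j.
  apply: edge_mono (Vp _) (Vp _) p1 p2 _ h1 h2 h3.
  move=> th hth; have [_ [[-> ->]|[q1 q2]]] := epos j th hth.
    by rewrite !mul0r subrr addr0.
  split; lra.
have cu : forall j, continuous (u j) by move=> j; exact: cont_Pik.
have cw : forall j, continuous (w j) by move=> j; exact: cont_Pki.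
have n0 : (0 < n)%N by rewrite -hmn.
have leaf := @tree_leaf n m ends (Ordinal n0) (conn _) hmn.
have Fsub : forall j p, F j p -> cF j p by move=> j p; exact: hull_sub.
have cFconv : forall j p q t, 0 <= t <= 1 -> cF j p -> F j q ->
    cF j (t * p.1 + (1 - t) * q.1, t * p.2 + (1 - t) * q.2).
  by move=> j p q t; exact: hull_comb.
have G : forall (L P : 'I_n -> R) (x : 'I_m -> R * R),
  (exists z0, opf_feasible ends Plo Phi L F z0) ->
  (forall i, Plo i <= P i <= Phi i) -> (forall j, cF j (x j)) ->
  (forall i, net_flow ends x i <= P i - L i) ->
  exists z', opf_feasible ends Plo Phi L F z' /\ forall i, z'.1 i <= P i.
  move=> L P x [z0 [hb0 [hbal0 hF0]]] hP hx hnet.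
  have [th0 th0P] := choice hF0.
  have [th1 th1P] := choice (fun j => hull_below (Vp _) (Vp _) (gb j).1 (gb j).2 (epos j) (hx j)).
  have e0 : (fun j => (u j (th0 j), w j (th0 j))) = z0.2.
    by apply: boolp.funext => j; have [_ ->] := th0P j.
  have := @flowT R n m ends thlo thhi u w cu cw mono leaf [set: 'I_m]
     (fun i => Plo i - L i) (fun i => P i - L i).
  case.
  - by move=> i; have /andP[p1 p2] := hP i; lra.
  - exists th0; split; first by move=> j; have [-> _] := th0P j.
    move=> i; rewrite NS_net e0 -hbal0; have /andP[p1 p2] := hb0 i; lra.
  - exists th1; split; first by move=> j; have [-> _] := th1P j.
    move=> i; rewrite NS_net; apply: le_trans (hnet i); rewrite !net_exp.
    apply: ler_sum => j _; have [_ [q1 q2]] := th1P j.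
    by apply: lerD; case: ifP => _ //.
  move=> th [bx hth].
  exists (fun i => L i + NS ends u w [set: 'I_m] th i, fun j => (u j (th j), w j (th j))).
  split; last by move=> i /=; have /andP[_ q] := hth i; lra.
  split.
    move=> i /=; have /andP[q1 q2] := hth i; have /andP[p1 p2] := hP i.
    apply/andP; split; lra.
  split; first by move=> i /=; rewrite NS_net; ring.
  by move=> j /=; exists (th j); split; [exact: bx|].
have [f0 [hf0 _]] := lmp.
split.
  exists f0; split; first exact: (conv_opt fmono Fsub G hf0).
  split.
    by move=> y [z [hb [hF ->]]]; exact: (lag_lb fmono fconv cFconv G lmp hf0 hb hF).
  move=> e ep; have [z [[hb [hbal hF]] lt]] := opt_approx hf0 ep.
  exists (lagrangian ends f PD lam z); split.
    by exists z; split=> //; split=> // j; apply: Fsub.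
  rewrite lagE big1 ?subr0 // => i _; rewrite (hbal i); ring.
split.
  by move=> mu hmu; exact: (uniq_mu fmono Fsub G lmp hf0 hmu).
by move=> i; exact: (lam_ge0 fmono Fsub G lmp hf0 i).
Qed.
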